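(* Let $S=\mathcal{M}[K,G,\Lambda;P]$ be a Rees matrix semigroup. If $|K|>1$ or $|\Lambda|>1$, then $\sigma_s(S)=2$. If $|K|=|\Lambda|=1$, then $S$ is a group.
   Context: For a group $G$, nonempty sets $K,\Lambda$ and a $\Lambda\times K$ matrix $P=(p_{\lambda,\kappa})$ with entries in $G$, the Rees matrix semigroup $\mathcal{M}[K,G,\Lambda;P]$ is the set $K\times G\times\Lambda$ with product $(\kappa,g,\lambda)(\mu,h,\nu)=(\kappa,gp_{\lambda,\mu}h,\nu)$. $\sigma_s(S)$ is the least positive integer $n$ such that $S$ is the union of $n$ proper subsemigroups, or $\infty$ if none exists. *)

(* Defs.v *)
From Stdlib Require Import Arith.

Set Implicit Arguments.

Record Group := {
  gcar :> Type;
  gmul : gcar -> gcar -> gcar;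
  gone : gcar;
  ginv : gcar -> gcar;
  gmulA : forall x y z, gmul x (gmul y z) = gmul (gmul x y) z;
  gmul1l : forall x, gmul gone x = x;
  gmul1r : forall x, gmul x gone = x;
  gmulVl : forall x, gmul (ginv x) x = gone;
  gmulVr : forall x, gmul x (ginv x) = gone
}.

Definition rees_mul {K L : Type} {G : Group} (P : L -> K -> G)
  (x y : K * G * L) : K * G * L :=
  match x, y with
  | (k, g, l), (m, h, n) => (k, gmul G g (gmul G (P l m) h), n)
  end.

Definition is_subsemigroup (T : Type) (op : T -> T -> T) (A : T -> Prop) :=
  forall x y, A x -> A y -> A (op x y).

Definition is_proper_subsemigroup (T : Type) (op : T -> T -> T) (A : T -> Prop) :=
  is_subsemigroup op A /\ exists x, ~ A x.

Definition covered_by (T : Type) (op : T -> T -> T) (n : nat) :=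
  0 < n /\
  exists A : nat -> T -> Prop,
    (forall i, i < n -> is_proper_subsemigroup op (A i)) /\
    (forall x, exists i, i < n /\ A i x).

Definition sigma_s_is (T : Type) (op : T -> T -> T) (n : nat) :=
  covered_by op n /\ forall m, covered_by op m -> n <= m.

Definition is_group (T : Type) (op : T -> T -> T) :=
  (forall x y z, op x (op y z) = op (op x y) z) /\
  exists e : T, (forall x, op e x = x /\ op x e = x) /\
    forall x, exists y, op x y = e /\ op y x = e.

(* Main.v *)
Require Import Defs.
From Stdlib Require Import Arith Lia Classical.

Lemma cov_ge2 T (op : T -> T -> T) m : covered_by op m -> 2 <= m.
Proof.
  intros [Hm [A [HA Hc]]].
  destruct m as [|[|m]]; try lia.
  destruct (HA 0 ltac:(lia)) as [_ [x Hx]].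
  destruct (Hc x) as [i [Hi Ai]]. assert (i = 0) by lia. subst. contradiction.
Qed.

Lemma cov2 T (op : T -> T -> T) (Q : T -> Prop) a b :
  (forall x y, Q x -> Q y -> Q (op x y)) ->
  (forall x y, ~ Q x -> ~ Q y -> ~ Q (op x y)) ->
  Q a -> ~ Q b -> sigma_s_is op 2.
Proof.
  intros H1 H2 Qa Qb. split; [|intros m Hm; eapply cov_ge2; exact Hm].
  split; [lia|].
  exists (fun i x => if i =? 0 then Q x else ~ Q x). split.
  - intros i Hi. destruct i as [|i]; simpl.
    + split; [exact H1| exists b; exact Qb].
    + split; [exact H2| exists a; tauto].
  - intros x. destruct (classic (Q x)).
    + exists 0; simpl; split; [lia|auto].
    + exists 1; simpl; split; [lia|auto].
Qed.

Theorem mainTheorem8 (K L : Type) (G : Group) (P : L -> K -> G) :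
  inhabited K -> inhabited L ->
  (((exists k1 k2 : K, k1 <> k2) \/ (exists l1 l2 : L, l1 <> l2)) ->
     sigma_s_is (rees_mul P) 2) /\
  ((exists k0 : K, forall k, k = k0) -> (exists l0 : L, forall l, l = l0) ->
     is_group (rees_mul P)).
Proof.
  intros [k] [l]. split.
  - intros [[k1 [k2 Hk]]|[l1 [l2 Hl]]].
    + apply (@cov2 _ _ (fun x => fst (fst x) = k1) (k1, gone G, l) (k2, gone G, l)).
      * intros [[a b] c] [[d e] f]; simpl; auto.
      * intros [[a b] c] [[d e] f]; simpl; auto.
      * reflexivity.
      * simpl; auto.
    + apply (@cov2 _ _ (fun x => snd x = l1) (k, gone G, l1) (k, gone G, l2)).
      * intros [[a b] c] [[d e] f]; simpl; auto.
      * intros [[a b] c] [[d e] f]; simpl; auto.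
      * reflexivity.
      * simpl; auto.
  - intros [k0 Hk] [l0 Hl]. split.
    + intros [[a b] c] [[d e] f] [[g h] i]; simpl.
      rewrite !gmulA. reflexivity.
    + exists (k0, ginv G (P l0 k0), l0). split.
      * intros [[a b] c]; simpl. rewrite (Hk a), (Hl c).
        rewrite !gmulA, gmulVl, !gmul1l. split; [reflexivity|]. rewrite <- !gmulA. rewrite gmulVr, gmul1r. reflexivity.
      * intros [[a b] c]. rewrite (Hk a), (Hl c).
        exists (k0, gmul G (ginv G (P l0 k0)) (gmul G (ginv G b) (ginv G (P l0 k0))), l0).
        simpl. split.
        -- rewrite (gmulA G (P l0 k0) (ginv G (P l0 k0))), gmulVr, gmul1l, gmulA, gmulVr, gmul1l. reflexivity.
        -- rewrite <- !gmulA, (gmulA G (ginv G (P l0 k0)) (P l0 k0)), gmulVl, gmul1l, gmulVl, gmul1r. reflexivity.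
Qed.
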